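(* Fix an integer $\Delta\geq 2$. There exists $N$ (depending on $\Delta$) such that for every $2$-connected finite simple graph $G$ on $n\geq N$ vertices with maximum degree $\Delta$, the polynomial $\mathrm{nRel}(G;p)$ has at least two fixed points in $(0,1)$, i.e. at least two distinct $p\in(0,1)$ with $\mathrm{nRel}(G;p)=p$.
   Context: For a graph $G$ on $n$ vertices, a connected set is a nonempty vertex subset $C$ such that the induced subgraph $G[C]$ is connected. The node reliability of $G$ is the polynomial \[ \mathrm{nRel}(G;p)=\sum_{C}p^{|C|}(1-p)^{n-|C|}, \] the sum over all connected sets $C$ of $G$. *)

(* Defs.v *)
From HB Require Import structures.
From mathcomp Require Import all_boot all_order all_algebra.
From mathcomp Require Import reals.
Set Implicit Arguments. Unset Strict Implicit. Unset Printing Implicit Defensive.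
Import Order.TTheory GRing.Theory Num.Theory.

Definition simple_graph (T : finType) (e : rel T) : Prop :=
  symmetric e /\ irreflexive e.

Definition induced_rel (T : finType) (e : rel T) (C : {set T}) : rel T :=
  [rel x y | [&& x \in C, y \in C & e x y]].

Definition connected_set (T : finType) (e : rel T) (C : {set T}) : bool :=
  (C != set0) && [forall x in C, forall y in C, connect (induced_rel e C) x y].

Definition two_connected (T : finType) (e : rel T) : Prop :=
  2 < #|T| /\ connected_set e [set: T] /\
  forall v : T, connected_set e (~: [set v]).

Definition degree (T : finType) (e : rel T) (v : T) : nat := #|[set u | e v u]|.

Definition max_degree (T : finType) (e : rel T) : nat := \max_(v : T) degree e v.

Local Open Scope ring_scope.

Definition nRel (T : finType) (e : rel T) (R : realType) (p : R) : R :=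
  \sum_(C : {set T} | connected_set e C) p ^+ #|C| * (1 - p) ^+ (#|T| - #|C|).

(* Main.v *)
From mathcomp Require Import all_boot all_order all_algebra.
From mathcomp Require Import reals.
From mathcomp Require Import zify ring lra.
Import Order.TTheory GRing.Theory Num.Theory.
Require Import Defs.
Set Implicit Arguments. Unset Strict Implicit. Unset Printing Implicit Defensive.

Section G.
Variables (T : finType) (e : rel T).
Hypotheses (esym : symmetric e) (eirr : irreflexive e).

Definition nb v := [set u | e v u].
Definition cnb v := v |: nb v.
Definition bad v (C : {set T}) := (v \in C) && (nb v :&: C == set0).
Definition good (I : seq T) C := all (fun v => ~~ bad v C) I.
Fixpoint sep (I : seq T) : bool :=
  if I is v :: I' then all (fun u => [disjoint cnb u & cnb v]) I' && sep I' else true.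
Definition psi v C := v |: (C :\: nb v).

Lemma bad_local u (C C' : {set T}) : {in cnb u, forall x, (x \in C) = (x \in C')} ->
  bad u C = bad u C'.
Proof.
move=> h; rewrite /bad h ?setU11 //; congr (_ && (_ == _)).
apply/setP=> x; rewrite !inE; case ex: (e u x) => //=; apply: h.
by rewrite !inE ex orbT.
Qed.

Lemma psi_agree v (C : {set T}) x : x \notin cnb v -> (x \in psi v C) = (x \in C).
Proof.
rewrite !inE negb_or => /andP[xv xn].
by rewrite (negbTE xv) (negbTE xn).
Qed.

Lemma good_psi v I C : all (fun u => [disjoint cnb u & cnb v]) I ->
  good I (psi v C) = good I C.
Proof.
elim: I => [|u I IH] //= /andP[du hI]; rewrite IH //; congr (~~ _ && _).
apply: bad_local => x xu; apply: psi_agree.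
by rewrite (disjointFr du xu).
Qed.

Lemma bad_psi v C : bad v (psi v C).
Proof.
rewrite /bad /psi setU11 /=; apply/eqP/setP=> x; rewrite !inE.
case ex: (e v x) => //=.
have -> : (x == v) = false by apply/negbTE; apply: contraTneq ex => ->; rewrite eirr.
by [].
Qed.

Lemma psi_rec v C : C = (psi v C :\: cnb v) :|: (C :&: cnb v).
Proof.
apply/setP=> x; rewrite !inE.
by case: (x == v); case: (e v x); case: (x \in C).
Qed.

Lemma step v I D : all (fun u => [disjoint cnb u & cnb v]) I -> (#|cnb v| <= D)%N ->
  (#|[set C | good I C]| <= 2 ^ D * #|[set C | good I C && bad v C]|)%N.
Proof.
move=> hI hD.
have inj : injective (fun C => (psi v C, C :&: cnb v)).
  move=> C1 C2 /= [h1 h2]; by rewrite (psi_rec v C1) (psi_rec v C2) h1 h2.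
rewrite -(card_imset _ inj).
apply: leq_trans (subset_leq_card (_ : _ \subset setX [set C | good I C && bad v C] (powerset (cnb v)))) _.
  apply/subsetP => _ /imsetP[C CA ->]; rewrite in_setX /= !inE.
  rewrite good_psi // bad_psi subsetIr andbT; rewrite inE in CA; by rewrite CA.
rewrite cardsX card_powerset mulnC leq_mul2r; apply/orP; right.
by apply: leq_pexp2l.
Qed.

Lemma count I D : sep I -> (forall v, #|cnb v| <= D)%N ->
  ((2 ^ D) ^ (size I) * #|[set C | good I C]| <= (2 ^ D - 1) ^ (size I) * 2 ^ #|T|)%N.
Proof.
move=> + hD; elim: I => [|v I IH] /=.
  move=> _; rewrite !expn0 !mul1n.
  have -> : [set C : {set T} | true] = [set: {set T}] by apply/setP=> C; rewrite !inE.
  by rewrite -powersetT card_powerset cardsT.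
move=> /andP[hall hsep]; have := step hall (hD v).
have := cardsID [set C | bad v C] [set C | good I C].
have -> : [set C | good I C] :&: [set C | bad v C] = [set C | good I C && bad v C].
  by apply/setP=> C; rewrite !inE.
have -> : [set C | good I C] :\: [set C | bad v C] = [set C | good (v :: I) C].
  by apply/setP=> C; rewrite !inE /= andbC.
have := IH hsep.
set a := #|[set C | good I C]|.
set a1 := #|[set C | good I C && bad v C]|.
set a2 := #|[set C | good (v :: I) C]|.
set K := 2 ^ D.
move=> ih e1 h.
have K1 : (K * a2 <= (K - 1) * a)%N by nia.
rewrite !expnS -mulnA (mulnC K) -mulnA.
apply: leq_trans (leq_mul (leqnn (K ^ size I)) (_ : a2 * K <= (K-1)*a)) _.
  by rewrite mulnC.
by rewrite mulnCA -mulnA leq_mul2l ih orbT.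
Qed.

Definition N2 u := \bigcup_(w <- enum (cnb u)) cnb w.



Lemma card_bigcup_seq (r : seq T) (F : T -> {set T}) :
  (#|\bigcup_(i <- r) F i| <= \sum_(i <- r) #|F i|)%N.
Proof.
elim: r => [|a r IH]; first by rewrite !big_nil cards0.
rewrite !big_cons; apply: leq_trans (leq_card_setU _ _) _.
by rewrite leq_add2l.
Qed.

Lemma in_bigcup_seq (r : seq T) (F : T -> {set T}) u x :
  u \in r -> x \in F u -> x \in \bigcup_(i <- r) F i.
Proof.
elim: r => [|a r IH] //=; rewrite inE big_cons in_setU => /orP[/eqP->|ur] xF.
  by rewrite xF.
by rewrite IH ?orbT.
Qed.

Lemma notN2 u v : v \notin N2 u -> [disjoint cnb u & cnb v].
Proof.
rewrite -setI_eq0; apply: contraR => /set0Pn [x /setIP[xu xv]].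
apply: (in_bigcup_seq (u := x)); first by rewrite mem_enum.
move: xv; rewrite !inE => /orP[/eqP->|evx]; first by rewrite eqxx.
by rewrite esym evx orbT.
Qed.

Lemma card_N2 D u : (forall v, #|cnb v| <= D)%N -> (#|N2 u| <= D * D)%N.
Proof.
move=> hD; rewrite /N2; apply: leq_trans (card_bigcup_seq _ _) _.
apply: (@leq_trans (\sum_(i <- enum (cnb u)) D)); first by apply: leq_sum => i _; exact: hD.
by rewrite big_const_seq count_predT iter_addn_0 -cardE mulnC leq_mul2r hD orbT.
Qed.

Lemma construct D k : (forall v, #|cnb v| <= D)%N -> (0 < D)%N ->
  (k * (D * D) <= #|T|)%N -> exists I, size I = k /\ sep I.
Proof.
move=> hD D0; elim: k => [|k IH] hk; first by exists [::].
have [I [sI hI]] : exists I, size I = k /\ sep I.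
  by apply: IH; apply: leq_trans hk; rewrite leq_mul2r leqnSn orbT.
set U := \bigcup_(u <- I) N2 u.
have cU : (#|U| < #|T|)%N.
  have h1 := card_bigcup_seq I N2.
  have h2 : (\sum_(i <- I) #|N2 i| <= \sum_(i <- I) (D*D))%N.
    by apply: leq_sum => i _; exact: card_N2.
  rewrite big_const_seq count_predT sI iter_addn_0 in h2.
  rewrite -/U in h1; nia.
have : ~~ ([set: T] \subset U).
  apply: contraL cU => /subset_leq_card; rewrite cardsT => h.
  by rewrite -leqNgt.
case/subsetPn => v _ vU; exists (v :: I); split; first by rewrite /= sI.
rewrite /= hI andbT; apply/allP => u uI; apply: notN2.
by apply: contra vU => h; exact: in_bigcup_seq uI h.
Qed.

Lemma conn_good I C : connected_set e C ->
  good I C || (C \in [set [set x] | x : T]).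
Proof.
case g: (good I C) => //= /andP[_ /forallP hc].
move/negbT: g; rewrite /good => /allPn [v _ /negPn /andP[vC /eqP hv]].
apply/imsetP; exists v => //; apply/setP => w; rewrite inE.
apply/idP/eqP => [wC|->//]; apply/eqP; apply: contraT => wv.
have := hc v; rewrite vC /= => /forallP /(_ w); rewrite wC /=.
case/connectP => [[|x p]] /=; first by move=> _ wv'; rewrite wv' eqxx in wv.
case/andP => /and3P[_ xC evx] _ _.
have : x \in nb v :&: C by rewrite !inE evx xC.
by rewrite hv inE.
Qed.

End G.

Lemma bern_nat a k : (a ^ k * (a + k) <= (a + 1) ^ k * a)%N.
Proof.
elim: k => [|k IH]; first by rewrite !expn0 addn0.
rewrite !expnS; nia.
Qed.

Lemma four K : (2 <= K)%N -> (4 * (K - 1) ^ (K * 2) <= K ^ (K * 2))%N.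
Proof.
move=> K2; have := bern_nat (K - 1) K.
have -> : (K - 1 + 1 = K)%N by lia.
move=> h.
have h2 : (2 * (K - 1) ^ K <= K ^ K)%N.
  have : (2 * (K - 1) ^ K * (K - 1) <= K ^ K * (K - 1))%N.
    apply: leq_trans h; rewrite -mulnA mulnC -mulnA leq_mul2l; apply/orP; right; lia.
  by rewrite leq_mul2r; case/orP => // /eqP; lia.
rewrite !expnM; nia.
Qed.

Lemma pow4 n : (5 <= n)%N -> (4 * n < 2 ^ n)%N.
Proof.
elim: n => [|n IH] //; rewrite leq_eqVlt => /orP[/eqP<-//|h].
rewrite expnS; have := IH h; lia.
Qed.

Section Real.
Variable R : realType.
Local Open Scope ring_scope.

Lemma bern (a : R) k : 0 <= a -> a <= 1 -> 1 - k%:R * a <= (1 - a) ^+ k.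
Proof.
move=> a0 a1; elim: k => [|k IH]; first by rewrite mul0r subr0 expr0.
rewrite exprS -addn1 natrD mulrDl mul1r.
have k0 : 0 <= (k%:R : R) by [].
have b0 : 0 <= 1 - a by rewrite subr_ge0.
have : (1 - a) * (1 - k%:R * a) <= (1 - a) * (1 - a) ^+ k by rewrite ler_wpM2l.
nra.
Qed.

Lemma sub_sum (I : finType) (P Q : pred I) (F : I -> R) :
  (forall i, P i -> Q i) -> (forall i, Q i -> 0 <= F i) ->
  \sum_(i | P i) F i <= \sum_(i | Q i) F i.
Proof.
move=> PQ F0; rewrite [X in _ <= X](bigID P) /=.
rewrite [X in _ <= X + _](eq_bigl P); last first.
  by move=> i; case: (boolP (P i)) => [/PQ->|]; rewrite ?andbF ?andbT.
rewrite lerDl; apply: sumr_ge0 => i /andP[/F0] //.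
Qed.

End Real.

Lemma conn1 (T : finType) (e : rel T) x : connected_set e [set x].
Proof.
apply/andP; split; first by apply/set0Pn; exists x; rewrite inE.
apply/forallP => y; apply/implyP; rewrite inE => /eqP->.
apply/forallP => z; apply/implyP; rewrite inE => /eqP->; exact: connect0.
Qed.

Unset Implicit Arguments.
Local Open Scope ring_scope.

Theorem theorem4p3 (Delta : nat) (hDelta : (2 <= Delta)%N) :
  exists N : nat,
    forall (T : finType) (e : rel T),
      simple_graph e -> two_connected e -> (N <= #|T|)%N ->
      max_degree e = Delta ->
      forall R : realType,
        exists p1 p2 : R,
          [/\ p1 != p2, 0 < p1 < 1, 0 < p2 < 1,
              nRel e p1 = p1 & nRel e p2 = p2].
Proof.
pose D := Delta.+1; pose K := (2 ^ D)%N; pose m := (K * 2)%N.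
exists (maxn 5 (m * (D * D))).
move=> T e [esym eirr] [T3 [connT connC]] hN hmax R.
rewrite geq_max in hN; case/andP: hN => hN5 hNm.
have hD : forall v, (#|cnb e v| <= D)%N.
  move=> v; rewrite /cnb cardsU1.
  have : (#|nb e v| <= Delta)%N by rewrite -hmax; exact: (leq_bigmax v).
  by case: (v \notin nb e v) => /=; lia.
have [I [sI hI]] := construct esym hD (ltn0Sn _) hNm.
have hc := count eirr hI hD; rewrite sI -/K in hc.
have K2 : (2 <= K)%N by rewrite /K expnS; have := expn_gt0 2 Delta; lia.
have h4 := four K2.
set g := #|[set C | good e I C]| in hc.
set n := #|T| in hc hN5 hNm T3 *.
have hg : (4 * g <= 2 ^ n)%N.
  have : (K ^ m * (4 * g) <= K ^ m * 2 ^ n)%N.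
    rewrite mulnCA; apply: leq_trans (leq_mul (leqnn 4) hc) _.
    by rewrite mulnA leq_mul2r h4 orbT.
  by rewrite leq_pmul2l ?expn_gt0 //; lia.
have hconn : (#|[set C | connected_set e C]| <= n + g)%N.
  apply: leq_trans (subset_leq_card (_ : _ \subset [set [set x] | x : T] :|: [set C | good e I C])) _.
    apply/subsetP => C; rewrite !inE => /(conn_good I) /orP[->|->]; by rewrite ?orbT.
  apply: leq_trans (leq_card_setU _ _) _; rewrite leq_add2r.
  exact: leq_imset_card.
have h2 : (2 * #|[set C | connected_set e C]| < 2 ^ n)%N.
  have := pow4 hN5; lia.
pose F (p : R) (C : {set T}) := p ^+ #|C| * (1 - p) ^+ (n - #|C|).
have nRelE : forall p, nRel e p = \sum_(C | connected_set e C) F p C by [].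
have F0 : forall p C, 0 <= p <= 1 -> 0 <= F p C.
  move=> p C /andP[p0 p1]; apply: mulr_ge0; apply: exprn_ge0 => //.
  by rewrite subr_ge0.
have hB : nRel e (2^-1 : R) < 2^-1.
  have -> : nRel e (2^-1 : R) = #|[set C | connected_set e C]|%:R * (2^-1) ^+ n.
    rewrite nRelE (eq_bigr (fun _ => (2^-1 : R) ^+ n)); last first.
      move=> C _; rewrite /F.
      have -> : (1 - 2^-1 : R) = 2^-1 by field.
      by rewrite -exprD subnKC // max_card.
    rewrite (eq_bigl (fun C => C \in [set C | connected_set e C])); last by move=> C; rewrite inE.
    by rewrite sumr_const mulr_natl.
  have H : ((2 * #|[set C | connected_set e C]|)%N%:R < (2 ^ n)%N%:R :> R) by rewrite ltr_nat.
  rewrite natrM natrX in H.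
  set N0 := (#|[set C | connected_set e C]|%:R : R) in H *.
  have y0 : (0 : R) < 2 ^+ n by apply: exprn_gt0.
  rewrite exprVn.
  set y := (2 : R) ^+ n in H y0 *.
  have yi : 0 < y^-1 by rewrite invr_gt0.
  have yy : y * y^-1 = 1 by rewrite mulfV // gt_eqF.
  nra.
pose k := n.-1.
have nk : n = k.+1 by rewrite /k; lia.
have kR : (n%:R : R) = k%:R + 1 by rewrite nk -addn1 natrD.
have k2 : (2%:R : R) <= k%:R by rewrite ler_nat /k; lia.
pose sr : R := (n%:R)^-1.
have s0 : 0 < sr by rewrite /sr invr_gt0 ltr0n; lia.
have sk : sr * (k%:R + 1) = 1 by rewrite /sr -kR mulVf // pnatr_eq0; lia.
have ks : k%:R * sr = 1 - sr by rewrite -[1 in RHS]sk; ring.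
have s3 : 3%:R * sr <= 1 by nra.
pose a := sr * sr.
have a01 : 0 <= a <= 1 by apply/andP; split; rewrite /a; nra.
have ak : k%:R * a = sr - sr * sr by rewrite /a mulrA ks; ring.
have hA : a < nRel e a.
  have : \sum_(C in [set [set x] | x : T]) F a C <= nRel e a.
    rewrite nRelE; apply: sub_sum => [C /imsetP[x _ ->]|C _]; [exact: conn1 | exact: F0].
  rewrite big_imset /=; last by move=> x y _ _; exact: set1_inj.
  rewrite (eq_bigr (fun _ => a * (1 - a) ^+ k)); last first.
    by move=> x _; rewrite /F cards1 expr1 /k subn1.
  rewrite sumr_const -mulr_natl -/n kR.
  have := bern k (proj1 (andP a01)) (proj2 (andP a01)).
  rewrite ak; set b := (1 - a) ^+ k => hb.
  have hsb : sr < b by nra.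
  have : a < (k%:R + 1) * (a * b).
    have -> : (k%:R + 1) * (a * b) = (sr * (k%:R + 1)) * sr * b by rewrite /a; ring.
    rewrite sk mul1r /a; nra.
  move=> hh1 hh2; exact: lt_le_trans hh1 hh2.
pose c := 1 - a.
have c01 : 0 <= c <= 1 by apply/andP; split; rewrite /c; nra.
have hC : c < nRel e c.
  rewrite nRelE (bigD1 setT) //=.
  have : \sum_(C in [set ~:[set v] | v : T]) F c C <=
         \sum_(C | connected_set e C && (C != setT)) F c C.
    apply: sub_sum => [C /imsetP[v _ ->]|C /andP[_ _]]; last exact: F0.
    rewrite connC /=; apply/eqP => h.
    by have := in_setT v; rewrite -h !inE eqxx.
  rewrite big_imset; last by move=> u w _ _ /setC_inj /set1_inj.
  rewrite (eq_bigr (fun _ => c ^+ k * a)); last first.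
    move=> v _; rewrite /F cardsC1 -/n -/k /c.
    have -> : (n - k = 1)%N by lia.
    by rewrite expr1; congr (_ * _); ring.
  rewrite sumr_const -mulr_natl -/n kR.
  rewrite /F cardsT -/n subnn expr0 mulr1 nk exprSr.
  have := bern k (proj1 (andP a01)) (proj2 (andP a01)).
  rewrite ak -/c; set b := c ^+ k => hb h.
  apply: lt_le_trans (_ : c < b * c + (k%:R + 1) * (b * a)) _; last by rewrite lerD2l.
  have e1 : b * c + (k%:R + 1) * (b * a) = b * (1 + (sr - sr * sr)) by rewrite /c -ak; ring.
  have u0 : 0 <= sr - sr * sr by nra.
  have hu : (1 - (sr - sr * sr)) * (1 + (sr - sr * sr)) <= b * (1 + (sr - sr * sr)).
    by rewrite ler_wpM2r //; lra.
  have hu2 : (sr - sr * sr) * (sr - sr * sr) < sr * sr.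
    have : sr - sr * sr < sr by nra.
    nra.
  rewrite e1 /c /a; nra.
pose Q : {poly R} :=
  \sum_(C | connected_set e C) ('X ^+ #|C| * (1 - 'X) ^+ (n - #|C|)) - 'X.
have hQ : forall x, Q.[x] = nRel e x - x.
  move=> x; rewrite /Q hornerD hornerN hornerX horner_sum nRelE; congr (_ - _).
  by apply: eq_bigr => C _; rewrite /F !hornerE.
have a0 : 0 < a by rewrite /a mulr_gt0.
have ah : a < 2^-1 by rewrite /a; nra.
have hc2 : 2^-1 < c by rewrite /c; nra.
have S1 : (- Q).[a] <= 0 <= (- Q).[2^-1].
  by rewrite !hornerN !hQ; apply/andP; split; lra.
have [r1 /andP[r1a r1b] rt1] := poly_ivt (ltW ah) S1.
have S2 : Q.[2^-1] <= 0 <= Q.[c].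
  by rewrite !hQ; apply/andP; split; lra.
have [r2 /andP[r2a r2b] rt2] := poly_ivt (ltW hc2) S2.
rewrite /root hornerN oppr_eq0 hQ subr_eq0 in rt1.
rewrite /root hQ subr_eq0 in rt2.
have r1h : r1 < 2^-1.
  rewrite lt_neqAle r1b andbT; apply: contraTneq rt1 => ->; by rewrite (lt_eqF hB).
have r2h : 2^-1 < r2.
  rewrite lt_neqAle r2a andbT; apply: contraTneq rt2 => <-; by rewrite (lt_eqF hB).
exists r1, r2; split.
- by rewrite lt_eqF // (lt_trans r1h r2h).
- by apply/andP; split; lra.
- by apply/andP; split; rewrite /c in r2b; lra.
- exact/eqP.
- exact/eqP.
Qed.
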